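(* Let $G=(V,E)$ be a Generalized Bartlett graph on $V=\{1,\dots,r\}$ for which the ordering by labels is a Generalized Bartlett ordering. Let $0=p_0<p_1<\dots<p_r$ be integers and for each $i$ let $G_i=(V_i,E_i)$ be a Generalized Bartlett graph on $V_i=\{p_{i-1}+1,\dots,p_i\}$ for which the ordering by labels is a Generalized Bartlett ordering. Define the expanded graph $\widetilde G=(\widetilde V,\widetilde E)$ by $\widetilde V=V_1\cup\dots\cup V_r=\{1,\dots,p_r\}$ and $\{k,l\}\in\widetilde E$ iff either $\{k,l\}\in E_i$ for some $i$, or $k=p_i$, $l=p_j$ for some $i\ne j$ with $\{i,j\}\in E$. Then $\widetilde G$ is a Generalized Bartlett graph.
   Context: For a graph $H=(W,F)$ with $|W|=m$ and an ordering $\sigma:W\to\{1,\dots,m\}$ (bijection), define $F^\sigma_0=F$ and for $i=1,\dots,m-2$, $F^\sigma_i=F^\sigma_{i-1}\cup\{\{u,v\}:u\ne v,\sigma(u)>i,\sigma(v)>i,\{u,\sigma^{-1}(i)\},\{v,\sigma^{-1}(i)\}\in F^\sigma_{i-1}\}$; let $D^\sigma(F)=F^\sigma_{m-2}$. $\sigma$ is a Generalized Bartlett ordering of $H$ if there are no $u,v,w\in W$ with $\{u,v\},\{v,w\},\{u,w\}\notin F$ but all three in $D^\sigma(F)$; $H$ is a Generalized Bartlett graph if such an ordering exists. For a graph on a set of integers, ''the ordering by labels'' means the order-preserving bijection onto $\{1,\dots,m\}$. *)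

(* Defs.v *)
From mathcomp Require Import all_boot.
Set Implicit Arguments. Unset Strict Implicit. Unset Printing Implicit Defensive.

Definition is_graph (W : seq nat) (e : rel nat) : Prop :=
  [/\ uniq W,
      (forall x y, e x y -> (x \in W) && (y \in W)),
      (forall x y, e x y = e y x) &
      (forall x, ~~ e x x)].

(* sigma : W -> {1,...,m} bijection (m = |W|): injective on W with values in
   [1, m] (bijectivity follows since W is finite and duplicate-free). *)
Definition is_ordering (W : seq nat) (sigma : nat -> nat) : Prop :=
  {in W &, injective sigma} /\
  (forall x, x \in W -> (1 <= sigma x) && (sigma x <= size W)).

(* F^sigma_i as a relation; the witness w with sigma w == i is sigma^{-1}(i). *)
Fixpoint fill (W : seq nat) (e : rel nat) (sigma : nat -> nat) (i : nat)
  : rel nat :=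
  match i with
  | 0 => e
  | i'.+1 => fun u v =>
      fill W e sigma i' u v ||
      [&& u \in W, v \in W, u != v, i < sigma u, i < sigma v &
          has (fun w => [&& sigma w == i, fill W e sigma i' u w
                           & fill W e sigma i' v w]) W]
  end.

Definition Dfill (W : seq nat) (e : rel nat) (sigma : nat -> nat) : rel nat :=
  fill W e sigma (size W - 2).

Definition GB_ordering (W : seq nat) (e : rel nat) (sigma : nat -> nat) : Prop :=
  is_ordering W sigma /\
  ~ (exists u v w,
       [/\ u \in W, v \in W & w \in W] /\
       [/\ ~~ e u v, ~~ e v w & ~~ e u w] /\
       [/\ Dfill W e sigma u v, Dfill W e sigma v w & Dfill W e sigma u w]).

Definition GB_graph (W : seq nat) (e : rel nat) : Prop :=
  exists sigma, GB_ordering W e sigma.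

Definition interval (a n : nat) : seq nat := iota a.+1 n.
Definition label_order (a : nat) : nat -> nat := fun x => x - a.

Definition expanded_edge (r : nat) (e : rel nat) (p : nat -> nat)
    (es : nat -> rel nat) : rel nat :=
  fun k l =>
    has (fun i => es i k l) (iota 1 r) ||
    has (fun i => has (fun j => [&& i != j, e i j, k == p i & l == p j])
                      (iota 1 r)) (iota 1 r).

(* Main.v *)
Require Import Defs.
From mathcomp Require Import all_boot zify.
Set Implicit Arguments. Unset Strict Implicit. Unset Printing Implicit Defensive.

Lemma fill_mono W e s a b u v : a <= b -> fill W e s a u v -> fill W e s b u v.
Proof.
move=> le H; rewrite -(subnKC le); elim: (b - a) => [|k IH]; first by rewrite addn0.
by rewrite addnS /= IH.
Qed.

Lemma fill_irr W e s t x : (forall x, ~~ e x x) -> ~~ fill W e s t x x.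
Proof.
move=> He; elim: t => [|t IH] /=; first exact: He.
by rewrite (negbTE IH) eqxx /= !andbF.
Qed.

Lemma fill_stab W e s : is_ordering W s ->
  forall k u v, fill W e s (size W - 2 + k) u v = fill W e s (size W - 2) u v.
Proof.
move=> [inj bd]; elim=> [|k IH] u v; first by rewrite addn0.
rewrite addnS /= IH.
case: (boolP (fill W e s (size W - 2) u v)) => //= _.
apply/negP => /and5P [uW vW nuv lu /andP [lv _]].
have := bd _ uW; have := bd _ vW => /andP [_ hv] /andP [_ hu].
have euv : s u = s v by lia.
by rewrite (inj _ _ uW vW euv) eqxx in nuv.
Qed.
Definition V (p : nat -> nat) i := interval (p i.-1) (p i - p i.-1).

Lemma plt r p : (forall i, i < r -> p i < p i.+1) ->
  forall i j, i < j <= r -> p i < p j.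
Proof.
move=> Hp i; elim=> [|j IH] //= /andP [ij jr].
rewrite ltnS leq_eqVlt in ij; case/orP: ij => [/eqP -> | ij].
  by apply: Hp.
apply: (ltn_trans (IH _)); first by rewrite ij /= ltnW.
exact: Hp.
Qed.

Lemma plt_iff r p : (forall i, i < r -> p i < p i.+1) ->
  forall i j, i <= r -> j <= r -> (p i < p j) = (i < j).
Proof.
move=> Hp i j ir jr; case: (ltnP i j) => ij.
  by apply: (plt Hp); rewrite ij.
apply/negbTE; rewrite -leqNgt; rewrite leq_eqVlt in ij; case/orP: ij => [/eqP->//|ji].
by apply/ltnW/(plt Hp); rewrite ji.
Qed.

Lemma memV p i x : p i.-1 <= p i -> (x \in V p i) = (p i.-1 < x <= p i).
Proof. move=> h; rewrite /V /interval mem_iota; lia. Qed.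

Section S.
Variables (r : nat) (p : nat -> nat).
Hypothesis Hp : forall i, i < r -> p i < p i.+1.

Lemma pinj i j : i <= r -> j <= r -> p i = p j -> i = j.
Proof.
move=> ir jr e; have := plt_iff Hp ir jr; have := plt_iff Hp jr ir.
rewrite e ltnn; lia.
Qed.

Lemma memV' i x : 1 <= i <= r -> (x \in V p i) = (p i.-1 < x <= p i).
Proof.
move=> ri; apply: memV; apply: ltnW; apply: (plt Hp); lia.
Qed.

Lemma Vdisj i j x : 1 <= i <= r -> 1 <= j <= r -> x \in V p i -> x \in V p j -> i = j.
Proof.
move=> ri rj; rewrite !memV' // => xi xj.
case: (ltngtP i j) => // ij.
  have : p i <= p j.-1.
    case: (ltngtP i j.-1) => h; [by apply/ltnW/(plt Hp); lia| lia | by rewrite h].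
  lia.
have : p j <= p i.-1.
  case: (ltngtP j i.-1) => h; [by apply/ltnW/(plt Hp); lia| lia | by rewrite h].
lia.
Qed.

Lemma Vtop i a x : 1 <= i <= r -> 1 <= a <= r -> x \in V p i -> x = p a -> a = i.
Proof.
move=> ri ra; rewrite memV' // => xi ex; subst x.
have h1 : (p i.-1 < p a) = (i.-1 < a) by apply: (plt_iff Hp); lia.
have h2 : (p i < p a) = (i < a) by apply: (plt_iff Hp); lia.
move: xi; rewrite h1 (leqNgt (p a)) h2; lia.
Qed.

Definition WB x y := exists k, [/\ 1 <= k <= r, x \in V p k & y \in V p k].
Definition WT x y := exists c d, [/\ 1 <= c <= r, 1 <= d <= r, x = p c & y = p d].

Lemma WB_sym x y : WB x y -> WB y x.
Proof. by case=> k [*]; exists k. Qed.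
Lemma WT_sym x y : WT x y -> WT y x.
Proof. by case=> c [d [*]]; exists d, c. Qed.

Lemma mixed x y z : x != y -> x != z -> y != z ->
  WB x y -> WT x z -> WB y z \/ WT y z -> False.
Proof.
move=> nxy nxz nyz [i [ri xi yi]] [a [b [ra rb ex ez]]].
have ai := Vtop ri ra xi ex; subst a.
case=> [[k [rk yk zk]] | [c [d [rc rd ey ez']]]].
  have ki := Vdisj rk ri yk yi; subst k.
  have := Vtop ri rb zk ez => bi; subst b.
  by rewrite ex ez eqxx in nxz.
have := Vtop ri rc yi ey => ci; subst c.
by rewrite ex ey eqxx in nxy.
Qed.
End S.

Lemma subn0' x : label_order 0 x = x.
Proof. by rewrite /label_order subn0. Qed.

Theorem theorem6 (r : nat) (e : rel nat) (p : nat -> nat) (es : nat -> rel nat) :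
  is_graph (interval 0 r) e ->
  GB_graph (interval 0 r) e ->
  GB_ordering (interval 0 r) e (label_order 0) ->
  p 0 = 0 ->
  (forall i, i < r -> p i < p i.+1) ->
  (forall i, 1 <= i <= r ->
     [/\ is_graph (interval (p i.-1) (p i - p i.-1)) (es i),
         GB_graph (interval (p i.-1) (p i - p i.-1)) (es i) &
         GB_ordering (interval (p i.-1) (p i - p i.-1)) (es i)
                     (label_order (p i.-1))]) ->
  GB_graph (interval 0 (p r)) (expanded_edge r e p es).
Proof.
move=> He _ HGo p0 Hp Hi.
set P := p r; set W := interval 0 P; set et := expanded_edge r e p es.
set G := interval 0 r.
have memG x : (x \in G) = (1 <= x <= r) by rewrite /G /interval mem_iota; lia.
have mem1 x : (x \in iota 1 r) = (1 <= x <= r) by rewrite mem_iota; lia.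
have inv : forall t u v, fill W et (label_order 0) t u v ->
  (exists i, [/\ 1 <= i <= r, u \in V p i, v \in V p i &
      fill (V p i) (es i) (label_order (p i.-1)) (t - p i.-1) u v]) \/
  (exists a b, [/\ 1 <= a <= r, 1 <= b <= r, u = p a, v = p b &
      forall c, 1 <= c <= r -> t < p c -> fill G e (label_order 0) c.-1 a b]).
  elim=> [|t IH] u v /=.
    rewrite /et /expanded_edge => /orP [/hasP [i Hi1 Heu] | /hasP [a Ha /hasP [b Hb /and4P [nab eab /eqP eu /eqP ev]]]].
      left; exists i; rewrite mem1 in Hi1.
      have [[_ Hin _ _] _ _] := Hi i Hi1.
      have /andP [ui vi] := Hin _ _ Heu.
      by split => //; rewrite sub0n.
    right; exists a, b; rewrite mem1 in Ha; rewrite mem1 in Hb; split => // c rc _.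
    by apply: (fill_mono (leq0n _)).
  move=> /orP [old | /and5P [uW vW nuv lu /andP [lv /hasP [w Ww /and3P [/eqP sw fuw fvw]]]]].
    case: (IH _ _ old) => [[i [ri ui vi fi]] | [a [b [ra rb eu ev fc]]]].
      left; exists i; split => //; apply: fill_mono fi; lia.
    right; exists a, b; split => // c rc lt; apply: fc => //; lia.
  rewrite subn0' in sw; rewrite subn0' in lu; rewrite subn0' in lv; subst w.
  case: (IH _ _ fuw) => [[i [ri ui wi fi]] | [a [c [ra rc eu ew fc]]]];
  case: (IH _ _ fvw) => [[j [rj vj wj fj]] | [b [c' [rb rc' ev ew' fc']]]].
  - have ij := Vdisj Hp ri rj wi wj; subst j.
    left; exists i; split => //.
    have := wi; rewrite (memV' Hp) // => wi'.
    rewrite (_ : t.+1 - p i.-1 = (t - p i.-1).+1); last by lia.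
    rewrite /=; apply/orP; right.
    have := ui; rewrite (memV' Hp) // => ui'.
    have := vj; rewrite (memV' Hp) // => vi'.
    apply/and5P; split => //; first by rewrite /label_order; lia.
    apply/andP; split; first by rewrite /label_order; lia.
    apply/hasP; exists t.+1 => //; apply/and3P; split => //.
    by rewrite /label_order; apply/eqP; lia.
  - have := Vtop Hp ri rc' wi ew' => ci; subst c'.
    have := ui; rewrite (memV' Hp) // => ui'; lia.
  - have := Vtop Hp rj rc wj ew => ci; subst c.
    have := vj; rewrite (memV' Hp) // => vj'; lia.
  - have cc : c = c' by apply: (pinj Hp); lia.
    subst c'.
    right; exists a, b; split => // c'' rc'' lt''.
    have pc : p c = t.+1 by [].
    have cc'' : c < c''.
      by rewrite -(plt_iff Hp); lia.
    apply: (fill_mono (a := c)); first lia.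
    rewrite -(prednK (_ : 0 < c)); last lia.
    rewrite /=; apply/orP; right.
    have nab : a != b.
      by apply/eqP => ab; rewrite eu ev ab eqxx in nuv.
    have ca : c < a by rewrite -(plt_iff Hp); lia.
    have cb : c < b by rewrite -(plt_iff Hp); lia.
    rewrite !memG !subn0' prednK; last lia.
    apply/and5P; split => //; try lia.
    apply/andP; split => //.
    apply/hasP; exists c; first by rewrite memG; lia.
    rewrite subn0' eqxx /=; apply/andP; split.
      by apply: fc => //; lia.
    by apply: fc' => //; lia.

have szW : size W = P by rewrite /W /interval size_iota.
have szG : size G = r by rewrite /G /interval size_iota.
have [ordG noG] := HGo.
have etirr : forall x, ~~ et x x.
  move=> x; rewrite /et /expanded_edge negb_or; apply/andP; split.
    apply/hasPn => i; rewrite mem1 => ri.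
    by have [[_ _ _ irr] _ _] := Hi i ri; apply: irr.
  apply/hasPn => i; rewrite mem1 => ri; apply/hasPn => j; rewrite mem1 => rj.
  apply/negP => /and4P [nij _ /eqP xi /eqP xj].
  have ij : i = j by apply: (pinj Hp); [lia | lia | rewrite -xi -xj].
  by rewrite ij eqxx in nij.
have esE : forall i x y, 1 <= i <= r -> es i x y -> et x y.
  move=> i x y ri h; rewrite /et /expanded_edge; apply/orP; left.
  by apply/hasP; exists i; rewrite ?mem1.
have eE : forall a b, 1 <= a <= r -> 1 <= b <= r -> a != b -> e a b -> et (p a) (p b).
  move=> a b ra rb nab h; rewrite /et /expanded_edge; apply/orP; right.
  apply/hasP; exists a; rewrite ?mem1 //; apply/hasP; exists b; rewrite ?mem1 //.
  by rewrite nab h !eqxx.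
have dist : forall x y, Dfill W et (label_order 0) x y -> x != y.
  move=> x y d; apply/eqP => xy; subst y; move: d; apply/negP; exact: fill_irr.
have sp : forall x y, Dfill W et (label_order 0) x y ->
  (exists i, [/\ 1 <= i <= r, x \in V p i, y \in V p i &
      Dfill (V p i) (es i) (label_order (p i.-1)) x y]) \/
  (exists a b, [/\ 1 <= a <= r, 1 <= b <= r, x = p a, y = p b &
      Dfill G e (label_order 0) a b]).
  move=> x y; rewrite /Dfill => /inv [[i [ri xi yi fi]] | [a [b [ra rb xa yb fc]]]].
    left; exists i; split => //.
    have [_ _ [ord _]] := Hi i ri.
    have ord' : is_ordering (V p i) (label_order (p i.-1)) := ord.
    have szV : size (V p i) = p i - p i.-1 by rewrite size_iota.
    have piP : p i <= P.
      rewrite /P; case: (ltngtP i r) => h; [by apply/ltnW/(plt Hp); lia | lia | by rewrite h].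
    rewrite -(fill_stab (es i) ord' (size W - 2 - p i.-1 - (size (V p i) - 2))).
    by rewrite subnKC //; rewrite szV szW; lia.
  right; exists a, b; split => //.
  have pr : 0 < P by rewrite /P -p0; apply: (plt Hp); lia.
  have := fc r ltac:(lia) ltac:(lia) => f.
  rewrite -(fill_stab e ordG (r.-1 - (size G - 2))).
  by rewrite subnKC //; rewrite szG; lia.
exists (label_order 0); split.
  split; first by move=> x y _ _; rewrite !subn0'.
  by move=> x; rewrite subn0' szW /W /interval mem_iota; lia.
move=> [u [v [w [[uW vW wW] [[neuv nevw neuw] [duv dvw duw]]]]]].
have xuv := dist _ _ duv; have xvw := dist _ _ dvw; have xuw := dist _ _ duw.
have xvu : v != u by rewrite eq_sym.
have xwv : w != v by rewrite eq_sym.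
have xwu : w != u by rewrite eq_sym.
case: (sp _ _ duv) => [[i [ri ui vi fuv]] | [a [b [ra rb ua vb fuv]]]];
case: (sp _ _ dvw) => [[j [rj vj wj fvw]] | [b' [c [rb' rc vb' wc fvw]]]];
case: (sp _ _ duw) => [[k [rk uk wk fuw]] | [a' [c' [ra' rc' ua' wc' fuw]]]].
- have ji := Vdisj Hp rj ri vj vi; subst j.
  have ki := Vdisj Hp rk ri uk ui; subst k.
  have [_ _ [_ noT]] := Hi i ri.
  apply: noT; exists u, v, w; split; first by split.
  split; split.
  + by apply/negP => h; move/negP: neuv; apply; apply: (esE i).
  + by apply/negP => h; move/negP: nevw; apply; apply: (esE i).
  + by apply/negP => h; move/negP: neuw; apply; apply: (esE i).
  + exact: fuv.
  + exact: fvw.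
  + exact: fuw.
- apply: (mixed Hp (x := u) (y := v) (z := w)) => //.
  + by exists i.
  + by exists a', c'.
  + by left; exists j.
- apply: (mixed Hp (x := v) (y := u) (z := w)) => //.
  + by exists i.
  + by exists b', c.
  + by left; exists k.
- apply: (mixed Hp (x := v) (y := u) (z := w)) => //.
  + by exists i.
  + by exists b', c.
  + by right; exists a', c'.
- apply: (mixed Hp (x := v) (y := w) (z := u)) => //.
  + by exists j.
  + by exists b, a.
  + by left; exists k.
- apply: (mixed Hp (x := v) (y := w) (z := u)) => //.
  + by exists j.
  + by exists b, a.
  + by right; exists c', a'.
- apply: (mixed Hp (x := u) (y := w) (z := v)) => //.
  + by exists k.
  + by exists a, b.
  + by right; exists c, b'.
- have bb : b' = b by apply: (pinj Hp); [case/andP: rb' | case/andP: rb | rewrite -vb -vb'].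
  have aa : a' = a by apply: (pinj Hp); [case/andP: ra' | case/andP: ra | rewrite -ua -ua'].
  have cc : c' = c by apply: (pinj Hp); [case/andP: rc' | case/andP: rc | rewrite -wc -wc'].
  subst b' a' c'.
  have nab : a != b by apply/eqP => h; move: xuv; rewrite ua vb h eqxx.
  have nbc : b != c by apply/eqP => h; move: xvw; rewrite vb wc h eqxx.
  have nac : a != c by apply/eqP => h; move: xuw; rewrite ua wc h eqxx.
  have aG : a \in G by rewrite memG.
  have bG : b \in G by rewrite memG.
  have cG : c \in G by rewrite memG.
  apply: noG; exists a, b, c; split; first by split.
  split; split.
  + by apply/negP => h; move/negP: neuv; apply; rewrite ua vb; apply: eE.
  + by apply/negP => h; move/negP: nevw; apply; rewrite vb wc; apply: eE.
  + by apply/negP => h; move/negP: neuw; apply; rewrite ua wc; apply: eE.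
  + exact: fuv.
  + exact: fvw.
  + exact: fuw.
Qed.
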